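(* Let $T$ be a monoidal monad on $\mathbf{Set}$, let $\Sigma$ be a signature and $\cdot\in\Sigma$ a binary operation symbol. Let $t[-]$ be a $\Sigma$-term with a single hole, built only from binary operation symbols of $\Sigma$, in which no variable occurs more than once and the variable $x$ does not occur. If $T$ preserves the equation $t[x]=t[x\cdot x]$, then $T$ is relevant.
   Context: $t[N]$ denotes the term obtained by placing the term $N$ in the hole of $t$. A monoidal monad on $\mathbf{Set}$ is a monad with natural $\psi_{X,Y}\colon TX\times TY\to T(X\times Y)$ making it lax monoidal with $\psi^0=\eta_1$ and with $\eta,\mu$ monoidal (equivalently a commutative monad); $\psi^n$ is its $n$-ary version. The lifting $\widehat T\mathcal A$ of a $\Sigma$-algebra $\mathcal A$ on $A$ has carrier $TA$ and operations $T\sigma_{\mathcal A}\circ\psi^{\mathrm{ar}(\sigma)}$; $T$ preserves an equation if $\widehat T\mathcal A$ satisfies it whenever $\mathcal A$ does. $T$ is relevant if $\psi_{A,B}\circ\langle T\pi_1,T\pi_2\rangle=\mathrm{id}_{T(A\times B)}$ for all sets $A,B$ (equivalently $\psi_{A,A}\circ\Delta_{TA}=T\Delta_A$ for all $A$). *)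

(* Defs.v *)
From mathcomp Require Import all_boot.
Set Implicit Arguments.
Unset Strict Implicit.
Unset Printing Implicit Defensive.

Record monoidal_monad := MonoidalMonad {
  MT :> Type -> Type;
  fmap : forall A B : Type, (A -> B) -> MT A -> MT B;
  eta : forall A : Type, A -> MT A;
  mu : forall A : Type, MT (MT A) -> MT A;
  psi : forall A B : Type, MT A * MT B -> MT (A * B);
  fmap_id : forall A (m : MT A), fmap id m = m;
  fmap_comp : forall A B C (f : A -> B) (g : B -> C) (m : MT A),
      fmap (fun a => g (f a)) m = fmap g (fmap f m);
  eta_nat : forall A B (f : A -> B) (a : A), fmap f (eta a) = eta (f a);
  mu_nat : forall A B (f : A -> B) (m : MT (MT A)),
      fmap f (mu m) = mu (fmap (fmap f) m);
  mu_eta : forall A (m : MT A), mu (eta m) = m;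
  mu_fmap_eta : forall A (m : MT A), mu (fmap (@eta A) m) = m;
  mu_mu : forall A (m : MT (MT (MT A))), mu (mu m) = mu (fmap (@mu A) m);
  psi_nat : forall A A' B B' (f : A -> A') (g : B -> B') (a : MT A) (b : MT B),
      psi (fmap f a, fmap g b) = fmap (fun p => (f p.1, g p.2)) (psi (a, b));
  (* lax monoidal, with psi^0 = eta_1 *)
  psi_unitl : forall B (b : MT B), fmap snd (psi (eta tt, b)) = b;
  psi_unitr : forall A (a : MT A), fmap fst (psi (a, eta tt)) = a;
  psi_assoc : forall A B C (a : MT A) (b : MT B) (c : MT C),
      fmap (fun p => (p.1.1, (p.1.2, p.2))) (psi (psi (a, b), c))
      = psi (a, psi (b, c));
  eta_monoidal : forall A B (a : A) (b : B), psi (eta a, eta b) = eta (a, b);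
  mu_monoidal : forall A B (a : MT (MT A)) (b : MT (MT B)),
      mu (fmap (@psi A B) (psi (a, b))) = psi (mu a, mu b)
}.

Arguments fmap {m0} {A B}.
Arguments eta {m0} {A}.
Arguments mu {m0} {A}.
Arguments psi {m0} {A B}.

Definition relevant (T : monoidal_monad) : Prop :=
  forall (A B : Type) (m : T (A * B)%type), psi (fmap fst m, fmap snd m) = m.

Definition fun0 (A : Type) (i : 'I_0) : A := False_rect A ltac:(by case: i).

Definition consf (A : Type) (n : nat) (a : A) (g : 'I_n -> A) : 'I_n.+1 -> A :=
  fun i => match unlift ord0 i with Some j => g j | None => a end.

Fixpoint psin (T : monoidal_monad) (A : Type) (n : nat) :
    ('I_n -> T A) -> T ('I_n -> A) :=
  match n return ('I_n -> T A) -> T ('I_n -> A) with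
  | 0 => fun _ => fmap (fun _ : unit => @fun0 A) (eta tt)
  | n'.+1 => fun f =>
      fmap (fun p : A * ('I_n' -> A) => consf p.1 p.2)
           (psi (f ord0, @psin T A n' (fun j => f (lift ord0 j))))
  end.

Inductive term (Sym : Type) (ar : Sym -> nat) (V : Type) : Type :=
  | Var of V
  | Op (s : Sym) of ('I_(ar s) -> term ar V).

Arguments Var {Sym ar V}.
Arguments Op {Sym ar V}.

Definition alg_ops (Sym : Type) (ar : Sym -> nat) (A : Type) :=
  forall s : Sym, ('I_(ar s) -> A) -> A.

Fixpoint eval Sym (ar : Sym -> nat) V A (ops : alg_ops ar A) (env : V -> A)
    (t : term ar V) : A :=
  match t with
  | Var v => env v
  | Op s f => ops s (fun i => eval ops env (f i))
  end.

Definition satisfies Sym (ar : Sym -> nat) A (ops : alg_ops ar A)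
    (l r : term ar nat) : Prop :=
  forall env : nat -> A, eval ops env l = eval ops env r.

Definition lift_ops (T : monoidal_monad) Sym (ar : Sym -> nat) A
    (ops : alg_ops ar A) : alg_ops ar (T A) :=
  fun s f => fmap (ops s) (psin f).

Definition preserves (T : monoidal_monad) Sym (ar : Sym -> nat)
    (l r : term ar nat) : Prop :=
  forall (A : Type) (ops : alg_ops ar A),
    satisfies ops l r -> satisfies (@lift_ops T _ _ _ ops) l r.

(* ---------- terms with a hole: hole = variable None ---------- *)
Fixpoint vars Sym (ar : Sym -> nat) V (t : term ar V) : seq V :=
  match t with
  | Var v => [:: v]
  | Op s f => flatten [seq vars (f i) | i <- enum 'I_(ar s)]
  end.

Fixpoint all_binary Sym (ar : Sym -> nat) V (t : term ar V) : bool :=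
  match t with
  | Var _ => true
  | Op s f => (ar s == 2) && all (fun i => all_binary (f i)) (enum 'I_(ar s))
  end.

Fixpoint plug Sym (ar : Sym -> nat) (t : term ar (option nat)) (N : term ar nat)
    : term ar nat :=
  match t with
  | Var None => N
  | Var (Some v) => Var v
  | Op s f => Op s (fun i => plug (f i) N)
  end.

(* Main.v *)
From Stdlib Require Import FunctionalExtensionality.
Require Import Defs.
From mathcomp Require Import all_boot.

Set Implicit Arguments.
Unset Strict Implicit.
Unset Printing Implicit Defensive.

Section Aux.
Variable T : monoidal_monad.

Lemma fmap_ext A B (f g : A -> B) (m : T A) : (forall a, f a = g a) -> fmap f m = fmap g m.
Proof. by move=> H; have -> : f = g by apply: functional_extensionality. Qed.

Lemma fmap_idE A (f : A -> A) (m : T A) : (forall a, f a = a) -> fmap f m = m.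
Proof. by move=> H; rewrite (fmap_ext _ H) fmap_id. Qed.

Lemma psi_eta_r A C (u : T A) (c : C) : psi (u, eta c) = fmap (fun a => (a, c)) u.
Proof.
rewrite -{1}(fmap_id u) -(@eta_nat T _ _ (fun _ : unit => c) tt) psi_nat.
have -> : psi (u, eta tt) = fmap (fun a => (a, tt)) (fmap fst (psi (u, eta tt))).
  rewrite -fmap_comp fmap_idE //; by case=> a [].
rewrite psi_unitr -!fmap_comp; by apply: fmap_ext.
Qed.

Lemma psi_eta_l A C (u : T A) (c : C) : psi (eta c, u) = fmap (fun a => (c, a)) u.
Proof.
rewrite -{1}(fmap_id u) -(@eta_nat T _ _ (fun _ : unit => c) tt) psi_nat.
have -> : psi (eta tt, u) = fmap (fun a => (tt, a)) (fmap snd (psi (eta tt, u))).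
  rewrite -fmap_comp fmap_idE //; by case=> [[]] a.
rewrite psi_unitl -!fmap_comp; by apply: fmap_ext.
Qed.

Variables A B : Type.
Definition X := option (A * B).
Definition mul (u v : X) : X :=
  match u, v with
  | None, _ => v
  | _, None => u
  | Some (a, _), Some (_, b) => Some (a, b)
  end.

Lemma mulxx u : mul u u = u. Proof. by case: u => [[]|]. Qed.
Lemma mulx0 u : mul u None = u. Proof. by case: u => [[]|]. Qed.

Definition opn (n : nat) : ('I_n -> X) -> X :=
  match n with
  | n'.+2 => fun g => mul (g ord0) (g (lift ord0 ord0))
  | _ => fun _ => None
  end.
Arguments opn : clear implicits.

Lemma consf0 C n (a : C) (g : 'I_n -> C) : consf a g ord0 = a.
Proof. by rewrite /consf unlift_none. Qed.
Lemma consfS C n (a : C) (g : 'I_n -> C) j : consf a g (lift ord0 j) = g j.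
Proof. by rewrite /consf liftK. Qed.

Lemma psin2 (g : 'I_2 -> T X) :
  fmap (opn 2) (psin g) = fmap (fun p => mul p.1 p.2) (psi (g ord0, g (lift ord0 ord0))).
Proof.
rewrite /= eta_nat psi_eta_r -fmap_comp -{1}(fmap_id (g ord0)) psi_nat -!fmap_comp.
rewrite -{1}(fmap_id (g ord0)) psi_nat -fmap_comp.
apply: fmap_ext => -[a b] /=.
by rewrite !consf0 consfS consf0.
Qed.

End Aux.
Arguments opn {A B} n.

Theorem theorem5 (T : monoidal_monad) (Sym : Type) (ar : Sym -> nat)
    (dot : Sym) (Hdot : ar dot = 2)
    (t : term ar (option nat)) (x : nat) :
  all_binary t ->
  None \in vars t ->
  uniq (vars t) ->
  Some x \notin vars t ->
  preserves T (plug t (Var x)) (plug t (Op dot (fun _ => Var x))) ->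
  relevant T.
Proof.
move=> Hb Hn Hu Hx Hp A B m.
pose ops : alg_ops ar (X A B) := fun s => opn (ar s).
have Hsat : satisfies ops (plug t (Var x)) (plug t (Op dot (fun _ => Var x))).
  move=> env.
  have Hd : eval ops env (Op dot (fun _ => Var x)) = eval ops env (Var x).
    rewrite /= /ops; move: (ar dot) Hdot => n e; subst n; by rewrite /= mulxx.
  move: Hd; move: (Var x) (Op dot _) => N1 N2 Hd.
  elim: t {Hb Hn Hu Hx Hp} => [[v|]|s f IH]; [done | exact: esym Hd | ]; rewrite /=.
  congr (ops s _); apply: functional_extensionality => i; exact: IH.
have := Hp _ _ Hsat.
pose y := fmap (@Some (A * B)) m.
pose envT : nat -> T (X A B) := fun v => if v == x then y else @eta T _ (@None (A * B)).
move=> /(_ envT).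
set E := eval (@lift_ops T _ _ _ ops) envT.
have key : forall (u : term ar (option nat)) N, all_binary u -> Some x \notin vars u ->
  (None \notin vars u -> E (plug u N) = eta None) /\
  (None \in vars u -> uniq (vars u) -> E (plug u N) = E N).
  move=> u N; elim: u => [[v|]|s f IH] /=.
  - move=> _; rewrite inE => Hv; split=> //.
    by rewrite /E /= /envT; case: eqP => // ev; rewrite ev eqxx in Hv.
  - by move=> _ _; split.
  - rewrite /E /= /lift_ops /ops -/E.
    move: (ar s) f IH => n f IH /andP [/eqP e Hall]; subst n.
    rewrite psin2 /=.
    rewrite enum_ordSl enum_ordSl enum_ord0 /= cats0 mem_cat negb_or.
    move: Hall; rewrite enum_ordSl enum_ordSl enum_ord0 /= andbT => /andP [H0 H1].
    case/andP=> Hx0 Hx1.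
    have [IH0a IH0b] := IH ord0 H0 Hx0.
    have [IH1a IH1b] := IH _ H1 Hx1.
    split.
      rewrite mem_cat negb_or => /andP [N0 N1]; rewrite IH0a // IH1a // eta_monoidal eta_nat //.
    rewrite cat_uniq => Hin /and3P [U0 Hdis U1].
    move: Hin; rewrite mem_cat; case/orP=> Hin.
      have N1 : None \notin vars (f (lift ord0 ord0)).
        by apply/negP=> Hc; move/hasPn: Hdis => /(_ _ Hc); rewrite Hin.
      rewrite IH0b // IH1a // psi_eta_r -fmap_comp -[RHS]fmap_id.
      by apply: fmap_ext => a /=; rewrite mulx0.
    have N0 : None \notin vars (f ord0).
      by apply/negP=> Hc; move/hasPn: Hdis => /(_ _ Hin); rewrite Hc.
    rewrite IH0a // IH1b // psi_eta_l -fmap_comp -[RHS]fmap_id.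
    by apply: fmap_ext => a.
have [_ K] := key t (Var x) Hb Hx.
have [_ K'] := key t (Op dot (fun _ => Var x)) Hb Hx.
rewrite K // K' // {K K' key}.
have HE : E (Op dot (fun _ => Var x)) = fmap (fun p => mul p.1 p.2) (psi (y, y)).
  rewrite /E /= /lift_ops /ops.
  move: (ar dot) Hdot => n e; subst n.
  by rewrite psin2 /envT eqxx.
rewrite HE /E /= /envT eqxx => Heq.
rewrite /y psi_nat -fmap_comp in Heq.
pose g := fun o : option (A * B) => if o is Some p then eta p else m.
have inj : forall w : T (A * B)%type, mu (fmap g (fmap (@Some _) w)) = w.
  by move=> w; rewrite -fmap_comp mu_fmap_eta.
rewrite -[RHS]inj Heq -fmap_comp psi_nat -[LHS]mu_fmap_eta -fmap_comp.
by congr mu; apply: fmap_ext => -[[a b] [c d]].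
Qed.
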